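(* Assume the linear band crossing and Band Crossing Scenario described in the context, with trajectory $(q(t),p(t))$ on $[0,t^* )$ and limit point $(q^*,p^* )$. (i) For all sufficiently small $\delta$ with $0<\delta<t^*$, the system $$\dot q_+=\partial_pE_+(p_+),\quad \dot p_+=-\partial_qW(q_+),\quad q_+(t^* )=q^*,\ p_+(t^* )=p^*$$ has a unique smooth solution $(q_+(t),p_+(t))\in\mathbb R\times U$ on $[t^*-\delta,t^*+\delta]$. This solution satisfies $(q(t),p(t))=(q_+(t),p_+(t))$ for all $t\in[t^*-\delta,t^* )$. (ii) For sufficiently small $T\ge t^*+\delta$, there exists a solution $(q_{n+1}(t),p_{n+1}(t))\in\mathbb R\times\mathcal B$ on $(t^*,T]$ of $$\dot q_{n+1}=\partial_pE_{n+1}(p_{n+1}),\quad \dot p_{n+1}=-\partial_qW(q_{n+1})$$ with $\lim_{t\downarrow t^*}(q_{n+1}(t),p_{n+1}(t))=(q^*,p^* )$ and $G(E_{n+1}(p_{n+1}(t)))>0$ for all $t\in(t^*,T]$. It satisfies $(q_+(t),p_+(t))=(q_{n+1}(t),p_{n+1}(t))$ for all $t\in(t^*,t^*+\delta]$. (iii) Consequently, the map $t\mapsto(\mathfrak q_+(t),\mathfrak p_+(t))$ is smooth as a map $[0,T]\to\mathbb R\times\mathcal B$. This map is defined as $(q(t),p(t))$ on $[0,t^*-\delta]$, as $(q_+(t),p_+(t))$ on $[t^*-\delta,t^*+\delta]$, and as $(q_{n+1}(t),p_{n+1}(t))$ on $[t^*+\delta,T]$.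
   Context: **Potentials.** Let $V:\mathbb R\to\mathbb R$ be smooth and $1$-periodic, and let $W:\mathbb R\to\mathbb R$ be smooth with all derivatives bounded. **Bloch bands.** For $p\in\mathbb R$, $H(p):=\frac12(p-i\partial_z)^2+V(z)$ acts on $1$-periodic functions. Its eigenvalues, ordered with multiplicity, are $E_1(p)\le E_2(p)\le\cdots$, with normalized eigenfunctions $\chi_m(z;p)$ (inner product $\int_0^1\bar fg$). The Brillouin zone is $\mathcal B=[0,2\pi]$, and $G(E_m(p)):=\min_{m'\ne m}|E_m(p)-E_{m'}(p)|$. **Linear band crossing.** $U\subset\mathcal B$ is open with $p^*\in U$, and: - (A1) $E_n(p^* )=E_{n+1}(p^* )$, and this is the only degeneracy of $E_n,E_{n+1}$ in $U$. - (A2) There is $M>0$ with $|E_m(p)-E_{n+1}(p)|,|E_n(p)-E_m(p)|\ge M$ for all $p\in\overline U$ and all $m\notin\{n,n+1\}$. - (A3) The maps $(E_+,\chi_+):=(E_n,\chi_n)$ for $p<p^*$ and $(E_{n+1},\chi_{n+1})$ for $p\ge p^*$, and $(E_-,\chi_-):=(E_{n+1},\chi_{n+1})$ for $p<p^*$ and $(E_n,\chi_n)$ for $p\ge p^*$, are smooth on $U$. - (A4) $\partial_pE_+(p^* )>0$ and $\partial_pE_-(p^* )<0$. **Band Crossing Scenario.** $(q_0,p_0)\in\mathbb R\times\mathcal B$ with $G(E_n(p_0))>0$, and $t^*>0$, are such that $\dot q=\partial_pE_n(p)$, $\dot p=-\partial_qW(q)$, $(q(0),p(0))=(q_0,p_0)$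 has a unique smooth solution $(q(t),p(t))\in\mathbb R\times\mathcal B$ on $[0,t^* )$. Along it $G(E_n(p(t)))>0$ for $t\in[0,t^* )$ and $\lim_{t\uparrow t^*}p(t)=p^*$. With $q^*:=\lim_{t\uparrow t^*}q(t)$, it is assumed that $-\partial_qW(q^* )>0$. *)

(* Defs.v *)
From Stdlib Require Import Reals Lra.
From Coquelicot Require Import Coquelicot.
Open Scope R_scope.

Definition smooth (f : R -> R) : Prop := forall (k : nat) (x : R), ex_derive_n f k x.

(** Derivative within a set I (one-sided at endpoints of closed intervals). *)
Definition has_deriv_within (I : R -> Prop) (f : R -> R) (t l : R) : Prop :=
  filterlim (fun s => (f s - f t) / (s - t))
            (within (fun s => I s /\ s <> t) (locally t)) (locally l).

Definition smooth_on (I : R -> Prop) (f : R -> R) : Prop :=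
  exists D : nat -> R -> R,
    (forall t, I t -> D 0%nat t = f t) /\
    (forall (k : nat) (t : R), I t -> has_deriv_within I (D k) t (D (S k) t)).

Definition solves_on (I : R -> Prop) (e W : R -> R) (q p : R -> R) : Prop :=
  forall t, I t ->
    has_deriv_within I q t (Derive e (p t)) /\
    has_deriv_within I p t (- Derive W (q t)).

Definition test_fun (f : R -> C) : Prop :=
  smooth (fun z => Re (f z)) /\ smooth (fun z => Im (f z)) /\
  (forall z, f (z + 1) = f z).

(** quadratic form <f, H(p) f> = int_0^1 1/2 |(p - i d/dz) f|^2 + V |f|^2 *)
Definition qform (V : R -> R) (p : R) (f : R -> C) : R :=
  RInt (fun z =>
     / 2 * ((p * Re (f z) + Derive (fun y => Im (f y)) z) ^ 2
            + (p * Im (f z) - Derive (fun y => Re (f y)) z) ^ 2)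
     + V z * (Re (f z) ^ 2 + Im (f z) ^ 2)) 0 1.

Definition nrm2 (f : R -> C) : R :=
  RInt (fun z => Re (f z) ^ 2 + Im (f z) ^ 2) 0 1.

Fixpoint csum (m : nat) (g : nat -> C) : C :=
  match m with
  | O => 0%C
  | S k => Cplus (csum k g) (g k)
  end.

Definition comb (m : nat) (F : nat -> R -> C) (c : nat -> C) : R -> C :=
  fun z => csum m (fun k => Cmult (c k) (F k z)).

Definition lin_indep (m : nat) (F : nat -> R -> C) : Prop :=
  forall c : nat -> C, (forall z, comb m F c z = 0%C) ->
    forall k, (k < m)%nat -> c k = 0%C.

Definition rayleigh_span (V : R -> R) (p : R) (m : nat) (F : nat -> R -> C) : R -> Prop :=
  fun x => exists c : nat -> C,
    (exists z, comb m F c z <> 0%C) /\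
    x = qform V p (comb m F c) / nrm2 (comb m F c).

(** m-th Bloch band (m >= 1), by the Courant-Fischer min-max principle:
    E_m(p) = inf over m-dim subspaces L of smooth periodic functions of
             sup_{f in L, f <> 0} <f,H(p)f>/<f,f>.
    These are the eigenvalues of H(p) ordered with multiplicity. *)
Definition band (V : R -> R) (m : nat) (p : R) : R :=
  real (Glb_Rbar (fun x => exists F : nat -> R -> C,
      (forall k, (k < m)%nat -> test_fun (F k)) /\ lin_indep m F /\
      Lub_Rbar (rayleigh_span V p m F) = Finite x)).

Definition gap (V : R -> R) (m : nat) (p : R) : R :=
  real (Glb_Rbar (fun x => exists m', (1 <= m')%nat /\ m' <> m /\
      x = Rabs (band V m p - band V m' p))).

(** f is a normalized eigenfunction of H(p) with eigenvalue E:
    1/2 (p^2 f - 2 i p f' - f'') + V f = E f, written in real/imaginary parts. *)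
Definition eigfun (V : R -> R) (p E : R) (f : R -> C) : Prop :=
  test_fun f /\ nrm2 f = 1 /\
  forall z,
    / 2 * (p ^ 2 * Re (f z) + 2 * p * Derive (fun y => Im (f y)) z
           - Derive_n (fun y => Re (f y)) 2 z) + V z * Re (f z) = E * Re (f z) /\
    / 2 * (p ^ 2 * Im (f z) - 2 * p * Derive (fun y => Re (f y)) z
           - Derive_n (fun y => Im (f y)) 2 z) + V z * Im (f z) = E * Im (f z).

(** the smooth branches E_+ and E_- through the crossing point pstar *)
Definition Eplus_band (V : R -> R) (n : nat) (pstar p : R) : R :=
  if Rlt_dec p pstar then band V n p else band V (S n) p.
Definition Eminus_band (V : R -> R) (n : nat) (pstar p : R) : R :=
  if Rlt_dec p pstar then band V (S n) p else band V n p.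

Definition closure_set (U : R -> Prop) (x : R) : Prop :=
  forall eps, 0 < eps -> exists u, U u /\ Rabs (u - x) < eps.

Definition glue (tstar delta : R) (f1 f2 f3 : R -> R) (t : R) : R :=
  if Rle_dec t (tstar - delta) then f1 t
  else if Rle_dec t (tstar + delta) then f2 t else f3 t.

(* Main.v *)
Require Import Defs.
From Stdlib Require Import Reals Lra Lia.
From Coquelicot Require Import Coquelicot.
Open Scope R_scope.

Lemma ball_R (x e y : R) : ball x e y <-> Rabs (y - x) < e.
Proof. reflexivity. Qed.

Lemma hdw_eps I f t l : has_deriv_within I f t l <->
  forall eps, 0 < eps -> exists d, 0 < d /\ forall s, I s -> s <> t -> Rabs (s - t) < d ->
    Rabs ((f s - f t)/(s - t) - l) < eps.
Proof.
  unfold has_deriv_within; rewrite filterlim_locally; split.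
  - intros H eps Heps. destruct (H (mkposreal eps Heps)) as [d Hd].
    exists d; split; [apply cond_pos|]. intros s Is Hs Hsd. apply (Hd s); auto.
  - intros H eps. destruct (H eps (cond_pos eps)) as [d [Hd0 Hd]].
    exists (mkposreal d Hd0). intros s Hs [Is Hst]. apply Hd; auto.
Qed.

Lemma derive_hdw I f t l : is_derive f t l -> has_deriv_within I f t l.
Proof.
  intro H. apply is_derive_Reals in H. apply hdw_eps. intros eps Heps.
  destruct (H eps Heps) as [d Hd]. exists d; split; [apply cond_pos|].
  intros s Is Hst Hsd. assert (s - t <> 0) by lra.
  specialize (Hd (s - t) H0 Hsd). replace (t + (s - t)) with s in Hd by ring. exact Hd.
Qed.

Lemma hdw_derive I f t l d : 0 < d -> (forall y, Rabs (y - t) < d -> I y) ->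
  has_deriv_within I f t l -> is_derive f t l.
Proof.
  intros Hd HI H. apply is_derive_Reals. rewrite hdw_eps in H. intros eps Heps.
  destruct (H eps Heps) as [d' [Hd' H']].
  assert (0 < Rmin d d') by (apply Rmin_glb_lt; auto).
  exists (mkposreal _ H0). intros h Hh Hhd. simpl in Hhd.
  assert (Rabs h < d) by (eapply Rlt_le_trans; [exact Hhd| apply Rmin_l]).
  assert (Rabs h < d') by (eapply Rlt_le_trans; [exact Hhd| apply Rmin_r]).
  specialize (H' (t + h)). replace (t + h - t) with h in H' by ring.
  apply H'; auto. apply HI. replace (t + h - t) with h by ring. auto. lra.
Qed.

Lemma hdw_loc I J f g t l eps : 0 < eps ->
  (forall s, Rabs (s - t) < eps -> J s -> I s /\ f s = g s) -> f t = g t ->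
  has_deriv_within I f t l -> has_deriv_within J g t l.
Proof.
  intros He HJ Ht H. rewrite hdw_eps in *. intros e He'.
  destruct (H e He') as [d [Hd H']]. exists (Rmin d eps). split.
  apply Rmin_glb_lt; auto.
  intros s Js Hst Hsd.
  assert (Rabs (s - t) < d) by (eapply Rlt_le_trans; [exact Hsd| apply Rmin_l]).
  assert (Rabs (s - t) < eps) by (eapply Rlt_le_trans; [exact Hsd| apply Rmin_r]).
  destruct (HJ s H1 Js) as [Is Hfg]. rewrite <- Hfg, <- Ht. apply H'; auto.
Qed.

Lemma hdw_cont I f t l : has_deriv_within I f t l ->
  forall eps, 0 < eps -> exists d, 0 < d /\ forall s, I s -> Rabs (s - t) < d -> Rabs (f s - f t) < eps.
Proof.
  rewrite hdw_eps. intros H eps Heps.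
  destruct (H 1 Rlt_0_1) as [d [Hd H']].
  assert (HL : 0 < Rabs l + 1) by (pose proof (Rabs_pos l); lra).
  exists (Rmin d (eps / (Rabs l + 1))). split.
  { apply Rmin_glb_lt; auto. apply Rdiv_lt_0_compat; auto. }
  intros s Is Hsd.
  assert (H1 : Rabs (s - t) < d) by (eapply Rlt_le_trans; [exact Hsd| apply Rmin_l]).
  assert (H2 : Rabs (s - t) < eps / (Rabs l + 1)) by (eapply Rlt_le_trans; [exact Hsd| apply Rmin_r]).
  destruct (Req_dec s t) as [->|Hst]. { rewrite Rminus_eq_0, Rabs_R0; auto. }
  specialize (H' s Is Hst H1).
  assert (Hq : Rabs ((f s - f t) / (s - t)) < Rabs l + 1).
  { pose proof (Rabs_triang_inv ((f s - f t) / (s - t)) l). lra. }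
  replace (f s - f t) with ((f s - f t) / (s - t) * (s - t)) by (field; lra).
  rewrite Rabs_mult.
  apply Rle_lt_trans with ((Rabs l + 1) * Rabs (s - t)).
  { apply Rmult_le_compat_r; [apply Rabs_pos | lra]. }
  apply Rmult_lt_reg_r with (/ (Rabs l + 1)). apply Rinv_0_lt_compat; auto.
  replace ((Rabs l + 1) * Rabs (s - t) * / (Rabs l + 1)) with (Rabs (s - t)) by (field; lra).
  unfold Rdiv in H2. exact H2.
Qed.

Definition clamp a b x := Rmax a (Rmin b x).

Lemma clamp_in a b x : a <= b -> a <= clamp a b x <= b.
Proof. intro. unfold clamp. split. apply Rmax_l. apply Rmax_lub; auto. apply Rmin_l. Qed.

Lemma clamp_id a b x : a <= x <= b -> clamp a b x = x.
Proof. intros [H1 H2]. unfold clamp. rewrite Rmin_right by auto. rewrite Rmax_right; auto. Qed.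

Lemma clamp_lip a b x y : a <= b -> Rabs (clamp a b y - clamp a b x) <= Rabs (y - x).
Proof.
  intro. unfold clamp, Rmax, Rmin.
  destruct (Rle_dec b y); destruct (Rle_dec b x); destruct (Rle_dec a b); destruct (Rle_dec a y);
  destruct (Rle_dec a x);
  unfold Rabs; repeat destruct Rcase_abs; lra.
Qed.

Definition cont_on a b f := forall x, a <= x <= b -> forall eps, 0 < eps ->
  exists d, 0 < d /\ forall y, a <= y <= b -> Rabs (y - x) < d -> Rabs (f y - f x) < eps.

Lemma mvt_in f df a b : a < b ->
  (forall x, a < x < b -> is_derive f x (df x)) -> cont_on a b f ->
  exists c, a < c < b /\ f b - f a = df c * (b - a).
Proof.
  intros Hab Hd Hc.
  set (g := fun x => f (clamp a b x)).
  set (m := (a + b) / 2).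
  set (df' := fun x => if Rlt_dec a x then if Rlt_dec x b then df x else df m else df m).
  assert (Hg1 : forall x, a < x < b -> is_derive g x (df' x)).
  { intros x Hx. unfold df'. destruct Rlt_dec; [|lra]. destruct Rlt_dec; [|lra].
    apply is_derive_ext_loc with f; [|apply Hd; auto].
    assert (0 < Rmin (x - a) (b - x)) by (apply Rmin_glb_lt; lra).
    exists (mkposreal _ H). intros y Hy. unfold g. rewrite clamp_id; auto.
    change (Rabs (y - x) < Rmin (x - a) (b - x)) in Hy.
    pose proof (Rmin_l (x - a) (b - x)). pose proof (Rmin_r (x - a) (b - x)).
    apply Rabs_def2 in Hy. lra. }
  assert (Hg2 : forall x, a <= x <= b -> continuity_pt g x).
  { intros x Hx. unfold continuity_pt, continue_in, limit1_in, limit_in; simpl; unfold R_dist.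
    intros eps Heps. destruct (Hc x Hx eps Heps) as [d [Hd0 Hd']].
    exists d; split; auto. intros y [_ Hy]. unfold g.
    replace (f (clamp a b x)) with (f x) by (rewrite clamp_id; auto).
    apply Hd'. apply clamp_in; lra.
    apply Rle_lt_trans with (Rabs (clamp a b y - clamp a b x)).
    { rewrite (clamp_id a b x Hx). apply Rle_refl. }
    eapply Rle_lt_trans; [apply clamp_lip; lra|]. auto. }
  destruct (MVT_gen g a b df') as [c [Hc1 Hc2]].
  { rewrite Rmin_left, Rmax_right by lra. auto. }
  { rewrite Rmin_left, Rmax_right by lra. auto. }
  rewrite Rmin_left, Rmax_right in Hc1 by lra.
  unfold g in Hc2. rewrite !clamp_id in Hc2 by lra.
  unfold df' in Hc2. destruct (Rlt_dec a c); destruct (Rlt_dec c b);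
  try (exists c; split; [lra|exact Hc2]);
  (exists m; split; [unfold m; lra| exact Hc2]).
Qed.

Lemma mvi f df a b M : a <= b ->
  (forall x, a < x < b -> is_derive f x (df x)) -> cont_on a b f ->
  (forall x, a < x < b -> Rabs (df x) <= M) -> Rabs (f b - f a) <= M * (b - a).
Proof.
  intros Hab Hd Hc HM. destruct (Req_dec a b) as [<-|Hne].
  { rewrite !Rminus_eq_0, Rabs_R0. lra. }
  destruct (mvt_in f df a b) as [c [Hc1 Hc2]]; auto. lra.
  rewrite Hc2, Rabs_mult, (Rabs_right (b - a)) by lra.
  apply Rmult_le_compat_r. lra. auto.
Qed.

Lemma incr_lt f df a b : a < b ->
  (forall x, a < x < b -> is_derive f x (df x)) -> cont_on a b f ->
  (forall x, a < x < b -> 0 < df x) -> f a < f b.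
Proof.
  intros Hab Hd Hc HM. destruct (mvt_in f df a b) as [c [Hc1 Hc2]]; auto.
  assert (0 < df c * (b - a)) by (apply Rmult_lt_0_compat; [apply HM; auto|lra]). lra.
Qed.

Definition opn (O : R -> Prop) := forall x, O x -> exists d, 0 < d /\ forall y, Rabs (y - x) < d -> O y.

Lemma opn_loc O x (P : R -> Prop) : opn O -> O x -> (forall y, O y -> P y) -> locally x P.
Proof.
  intros HO Hx HP. destruct (HO x Hx) as [d [Hd H]]. exists (mkposreal d Hd).
  intros y Hy. apply HP, H. apply ball_R in Hy. exact Hy.
Qed.

Definition Ck (k : nat) (O : R -> Prop) f :=
  forall j x, (j <= k)%nat -> O x -> ex_derive (Derive_n f j) x.
Definition Sm (O : R -> Prop) f := forall k x, O x -> ex_derive (Derive_n f k) x.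

Lemma Derive_n_S f j x : Derive_n f (S j) x = Derive_n (Derive f) j x.
Proof.
  revert x; induction j; intro x. reflexivity.
  change (Derive (Derive_n f (S j)) x = Derive (Derive_n (Derive f) j) x).
  apply Derive_ext. auto.
Qed.

Lemma Ck_0 O f : Ck 0 O f <-> forall x, O x -> ex_derive f x.
Proof.
  split. intros H x Hx. apply (H 0%nat x); auto.
  intros H j x Hj Hx. assert (j = 0%nat) by lia. subst. apply H; auto.
Qed.

Lemma Ck_S k O f : Ck (S k) O f <-> (forall x, O x -> ex_derive f x) /\ Ck k O (Derive f).
Proof.
  split.
  - intros H. split. intros x Hx. apply (H 0%nat x); auto. lia.
    intros j x Hj Hx. apply ex_derive_ext with (Derive_n f (S j)).
    intro t. apply Derive_n_S. apply H; auto. lia.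
  - intros [H1 H2] j x Hj Hx. destruct j. apply H1; auto.
    apply ex_derive_ext with (Derive_n (Derive f) j).
    intro t. symmetry. apply Derive_n_S. apply H2; auto. lia.
Qed.

Lemma Ck_weak k O f : Ck (S k) O f -> Ck k O f.
Proof. intros H j x Hj Hx. apply H; auto. Qed.

Lemma Sm_Ck O f : Sm O f <-> forall k, Ck k O f.
Proof.
  split. intros H k j x _ Hx. apply H; auto.
  intros H k x Hx. apply (H k k x); auto.
Qed.

Lemma Ck_ext k O f g : opn O -> (forall x, O x -> f x = g x) -> Ck k O f -> Ck k O g.
Proof.
  intros HO Hfg H j x Hj Hx. apply ex_derive_ext_loc with (Derive_n f j).
  apply opn_loc with O; auto. intros y Hy. apply Derive_n_ext_loc.
  apply opn_loc with O; auto. apply H; auto.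
Qed.

Lemma Sm_ext O f g : opn O -> (forall x, O x -> f x = g x) -> Sm O f -> Sm O g.
Proof. intros HO Hfg H. apply Sm_Ck. intro k. apply Ck_ext with f; auto. apply Sm_Ck; auto. Qed.

Lemma Ck_const k O (c : R) : opn O -> Ck k O (fun _ => c).
Proof.
  intros HO. revert c. induction k; intro c.
  apply Ck_0. intros. apply ex_derive_const.
  apply Ck_S. split. intros. apply ex_derive_const.
  apply Ck_ext with (fun _ => 0); auto. intros. rewrite Derive_const; auto.
Qed.

Lemma Ck_plus k O f g : opn O -> Ck k O f -> Ck k O g -> Ck k O (fun x => f x + g x).
Proof.
  intros HO. revert f g; induction k; intros f g Hf Hg.
  - apply Ck_0. rewrite Ck_0 in Hf, Hg. intros. apply (ex_derive_plus f g); auto.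
  - apply Ck_S. apply Ck_S in Hf as [Hf1 Hf2]. apply Ck_S in Hg as [Hg1 Hg2]. split.
    intros. apply (ex_derive_plus f g); auto.
    apply Ck_ext with (fun x => Derive f x + Derive g x); auto.
    intros. rewrite Derive_plus; auto.
Qed.

Lemma Ck_mult k O f g : opn O -> Ck k O f -> Ck k O g -> Ck k O (fun x => f x * g x).
Proof.
  intros HO. revert f g; induction k; intros f g Hf Hg.
  - apply Ck_0. rewrite Ck_0 in Hf, Hg. intros. apply ex_derive_mult; auto.
  - apply Ck_S. pose proof (Ck_weak _ _ _ Hf) as Hf'. pose proof (Ck_weak _ _ _ Hg) as Hg'.
    apply Ck_S in Hf as [Hf1 Hf2]. apply Ck_S in Hg as [Hg1 Hg2]. split.
    intros. apply ex_derive_mult; auto.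
    apply Ck_ext with (fun x => Derive f x * g x + f x * Derive g x); auto.
    intros. rewrite Derive_mult; auto.
    apply Ck_plus; auto.
Qed.

Lemma Ck_id k O : opn O -> Ck k O (fun x => x).
Proof.
  intros HO. destruct k. apply Ck_0. intros. apply ex_derive_id.
  apply Ck_S. split. intros. apply ex_derive_id.
  apply Ck_ext with (fun _ => 1); auto. intros. symmetry. apply Derive_id.
  apply Ck_const; auto.
Qed.

Lemma Ck_inv k O f : opn O -> Ck k O f -> (forall x, O x -> f x <> 0) -> Ck k O (fun x => / f x).
Proof.
  intros HO. revert f; induction k; intros f Hf Hnz.
  - apply Ck_0. rewrite Ck_0 in Hf. intros. apply ex_derive_inv; auto.
  - apply Ck_S. pose proof (Ck_weak _ _ _ Hf) as Hf'. 
    apply Ck_S in Hf as [Hf1 Hf2]. split.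
    intros. apply ex_derive_inv; auto.
    apply Ck_ext with (fun x => ((-1) * Derive f x) * (/ f x * / f x)); auto.
    intros. rewrite Derive_inv; auto. field. auto.
    apply Ck_mult; auto. apply Ck_mult; auto. apply Ck_const; auto.
    apply Ck_mult; auto.
Qed.

Lemma Sm_Derive O f : Sm O f -> Sm O (Derive f).
Proof.
  intros H k x Hx. apply ex_derive_ext with (Derive_n f (S k)).
  intro. apply Derive_n_S. apply H; auto.
Qed.

Lemma Ck_comp k O O' f g : opn O -> Sm O' f -> (forall x, O x -> O' (g x)) ->
  Ck k O g -> Ck k O (fun x => f (g x)).
Proof.
  intros HO. revert f; induction k; intros f Hf HOg Hg.
  - apply Ck_0. rewrite Ck_0 in Hg. intros. apply ex_derive_comp; auto.
    apply (Hf 0%nat); auto.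
  - apply Ck_S. pose proof (Ck_weak _ _ _ Hg) as Hg'.
    apply Ck_S in Hg as [Hg1 Hg2]. split.
    intros. apply ex_derive_comp; auto. apply (Hf 0%nat); auto.
    apply Ck_ext with (fun x => Derive g x * Derive f (g x)); auto.
    intros. rewrite (Derive_comp f g); auto. apply (Hf 0%nat); auto.
    apply Ck_mult; auto. apply IHk; auto. apply Sm_Derive; auto.
Qed.

Lemma Sm_comp O O' f g : opn O -> Sm O' f -> (forall x, O x -> O' (g x)) ->
  Sm O g -> Sm O (fun x => f (g x)).
Proof. intros. apply Sm_Ck. intro k. apply Ck_comp with O'; auto. apply Sm_Ck; auto. Qed.

Lemma Sm_plus O f g : opn O -> Sm O f -> Sm O g -> Sm O (fun x => f x + g x).
Proof. intros. apply Sm_Ck. intro k. apply Ck_plus; auto; apply Sm_Ck; auto. Qed.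
Lemma Sm_mult O f g : opn O -> Sm O f -> Sm O g -> Sm O (fun x => f x * g x).
Proof. intros. apply Sm_Ck. intro k. apply Ck_mult; auto; apply Sm_Ck; auto. Qed.
Lemma Sm_inv O f : opn O -> Sm O f -> (forall x, O x -> f x <> 0) -> Sm O (fun x => / f x).
Proof. intros. apply Sm_Ck. intro k. apply Ck_inv; auto; apply Sm_Ck; auto. Qed.
Lemma Sm_const O c : opn O -> Sm O (fun _ => c).
Proof. intros. apply Sm_Ck. intro k. apply Ck_const; auto. Qed.
Lemma Sm_id O : opn O -> Sm O (fun x => x).
Proof. intros. apply Sm_Ck. intro k. apply Ck_id; auto. Qed.

Lemma Sm_invfun O O' f g : opn O -> Sm O' f -> (forall y, O y -> O' (g y)) ->
  (forall y, O y -> is_derive g y (/ Derive f (g y))) ->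
  (forall y, O y -> Derive f (g y) <> 0) -> Sm O g.
Proof.
  intros HO Hf HOg Hd Hnz. apply Sm_Ck. intro k. induction k.
  - apply Ck_0. intros. eexists; apply Hd; auto.
  - apply Ck_S. split. intros. eexists; apply Hd; auto.
    apply Ck_ext with (fun y => / Derive f (g y)); auto.
    intros. symmetry. apply is_derive_unique. apply Hd; auto.
    apply Ck_inv; auto. apply Ck_comp with O'; auto. apply Sm_Derive; auto.
Qed.

Lemma Sm_antider O G h : opn O -> (forall x, O x -> is_derive G x (h x)) -> Sm O h -> Sm O G.
Proof.
  intros HO Hd Hh. apply Sm_Ck. intro k. destruct k.
  - apply Ck_0. intros. eexists; apply Hd; auto.
  - apply Ck_S. split. intros. eexists; apply Hd; auto.
    apply Ck_ext with h; auto. intros. symmetry. apply is_derive_unique. apply Hd; auto.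
    apply Sm_Ck; auto.
Qed.

Lemma Sm_smooth_on O I f : Sm O f -> (forall t, I t -> O t) -> smooth_on I f.
Proof.
  intros H HI. exists (Derive_n f). split. reflexivity.
  intros k t It. apply derive_hdw. apply Derive_correct. apply H; auto.
Qed.

Lemma smooth_on_Sm U e : opn U -> smooth_on U e ->
  exists D, (forall k x, U x -> Derive_n e k x = D k x) /\
            (forall k x, U x -> is_derive (D k) x (D (S k) x)) /\ Sm U e.
Proof.
  intros HU [D [H0 HD]].
  assert (HD' : forall k x, U x -> is_derive (D k) x (D (S k) x)).
  { intros k x Hx. destruct (HU x Hx) as [d [Hd Hd']].
    apply hdw_derive with U d; auto. }
  assert (Heq : forall k x, U x -> Derive_n e k x = D k x).
  { induction k; intros x Hx. symmetry. apply H0; auto.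
    change (Derive (Derive_n e k) x = D (S k) x).
    rewrite (Derive_ext_loc _ (D k)). apply is_derive_unique. auto.
    apply opn_loc with U; auto. }
  exists D. split; auto. split; auto.
  intros k x Hx. apply ex_derive_ext_loc with (D k).
  apply opn_loc with U; auto. intros. symmetry. auto.
  eexists. apply HD'. auto.
Qed.

Lemma ex_derive_cpt f x : ex_derive f x -> continuity_pt f x.
Proof.
  intros [l H]. apply is_derive_Reals in H. apply derivable_continuous_pt. exists l. exact H.
Qed.

Lemma ex_derive_eps f x : ex_derive f x -> forall eps, 0 < eps ->
  exists d, 0 < d /\ forall y, Rabs (y - x) < d -> Rabs (f y - f x) < eps.
Proof.
  intros H eps Heps. apply ex_derive_cpt in H.
  unfold continuity_pt, continue_in, limit1_in, limit_in in H; simpl in H; unfold R_dist in H.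
  destruct (H eps Heps) as [d [Hd H']]. exists d. split; auto.
  intros y Hy. destruct (Req_dec y x) as [->|Hne]. rewrite Rminus_eq_0, Rabs_R0; auto.
  apply H'. split; auto. split. exact I. auto.
Qed.

Lemma cont_on_der f a b : (forall x, a <= x <= b -> ex_derive f x) -> cont_on a b f.
Proof.
  intros H x Hx eps Heps. destruct (ex_derive_eps f x (H x Hx) eps Heps) as [d [Hd H']].
  exists d; auto.
Qed.

Lemma incr_open f a0 b0 : (forall x, a0 < x < b0 -> ex_derive f x /\ 0 < Derive f x) ->
  forall x y, a0 < x -> x < y -> y < b0 -> f x < f y.
Proof.
  intros H x y Hx Hxy Hy. apply incr_lt with (Derive f); auto.
  intros z Hz. apply Derive_correct. apply H. lra.
  apply cont_on_der. intros z Hz. apply H. lra.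
  intros z Hz. apply H. lra.
Qed.

From Stdlib Require Import ClassicalEpsilon Ranalysis5.

Lemma inv_fun (f : R -> R) a0 a b b0 : a0 < a -> a < b -> b < b0 ->
  (forall x, a0 < x < b0 -> ex_derive f x /\ 0 < Derive f x) ->
  exists g, (forall y, f a < y < f b -> a < g y < b /\ f (g y) = y /\ is_derive g y (/ Derive f (g y))) /\
    (forall x, a <= x <= b -> g (f x) = x) /\ f a < f b.
Proof.
  intros Ha Hab Hb Hf.
  assert (Hinc : forall x y, a0 < x -> x < y -> y < b0 -> f x < f y) by (apply incr_open; auto).
  set (g := fun y => epsilon (inhabits 0) (fun x => a <= x <= b /\ f x = y)).
  assert (Hfab : f a < f b) by (apply Hinc; lra).
  assert (Hg : forall y, f a <= y <= f b -> a <= g y <= b /\ f (g y) = y).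
  { intros y Hy. unfold g. apply epsilon_spec.
    destruct (f_interv_is_interv f a b y) as [x Hx]; auto.
    intros. apply ex_derive_cpt. apply Hf. lra. exists x; auto. }
  assert (Hinj : forall x y, a <= x <= b -> a <= y <= b -> f x = f y -> x = y).
  { intros x y Hx Hy Hxy. destruct (Rtotal_order x y) as [H|[H|H]]; auto.
    apply Hinc in H; lra. apply Hinc in H; lra. }
  assert (Hgf : forall x, a <= x <= b -> g (f x) = x).
  { intros x Hx. destruct (Hg (f x)) as [H1 H2].
    destruct (Rle_lt_or_eq_dec a x) as [Hl|He]; try lra.
    destruct (Rle_lt_or_eq_dec x b) as [Hl'|He']; try lra.
    split; left; apply Hinc; lra. subst; lra. subst; lra.
    apply Hinj; auto. }
  exists g. split; [|split; auto].
  intros y Hy. destruct (Hg y) as [H1 H2]; [lra|].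
  assert (Hgi : a < g y < b).
  { split. destruct H1 as [[H1|H1] _]; auto. rewrite <- H1 in H2. lra.
    destruct H1 as [_ [H1|H1]]; auto. rewrite H1 in H2. lra. }
  split; auto. split; auto.
  assert (Prf : forall z, g (f a) <= z <= g (f b) -> derivable_pt f z).
  { intros z Hz. rewrite !Hgf in Hz by lra.
    exists (Derive f z). apply is_derive_Reals. apply Derive_correct. apply Hf. lra. }
  assert (Prg : continuity_pt g y).
  { apply continuity_pt_recip_interv with f a b; auto.
    intros. apply Hinc; lra.
    intros. unfold comp, id. apply Hg. lra.
    intros. apply Hg. lra.
    intros. apply ex_derive_cpt. apply Hf. lra. }
  assert (Hincr : g (f a) <= g y <= g (f b)) by (rewrite !Hgf; lra).
  pose proof (derivable_pt_lim_recip_interv f g (f a) (f b) y Prf Prg Hfab Hy Hincr) as HH.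
  apply is_derive_Reals.
  assert (E : derive_pt f (g y) (Prf (g y) Hincr) = Derive f (g y)).
  { apply derive_pt_eq_0. apply is_derive_Reals. apply Derive_correct. apply Hf. lra. }
  rewrite E in HH. replace (/ Derive f (g y)) with (1 / Derive f (g y)) by (unfold Rdiv; ring).
  apply HH.
  intros. unfold comp, id. apply Hg. lra.
  assert (0 < Derive f (g y)) by (apply Hf; lra). lra.
Qed.

Lemma is_derive_sub_c f x l c : is_derive f x l -> is_derive (fun y => f y - c) x l.
Proof.
  intro H. pose proof (is_derive_minus f (fun _ => c) x l zero H (is_derive_const c x)) as H'.
  replace l with (minus l zero). exact H'.
  unfold minus, zero, plus, opp; simpl. ring.
Qed.

Lemma is_derive_comp' f g x df dg : is_derive f (g x) df -> is_derive g x dg ->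
  is_derive (fun y => f (g y)) x (dg * df).
Proof. intros. apply (is_derive_comp f g x df dg); auto. Qed.

Lemma opn_int a b : opn (fun x => a < x < b).
Proof.
  intros x Hx. exists (Rmin (x - a) (b - x)). split. apply Rmin_glb_lt; lra.
  intros y Hy. pose proof (Rmin_l (x - a) (b - x)). pose proof (Rmin_r (x - a) (b - x)).
  apply Rabs_def2 in Hy. lra.
Qed.

Lemma opn_T : opn (fun _ => True).
Proof. intros x _. exists 1. split; auto. lra. Qed.

Lemma Sm_sub (O O' : R -> Prop) f : (forall x, O' x -> O x) -> Sm O f -> Sm O' f.
Proof. intros H Hf k x Hx. apply Hf. auto. Qed.

Lemma Sm_opp O f : opn O -> Sm O f -> Sm O (fun x => - f x).
Proof.
  intros HO Hf. apply Sm_ext with (fun x => (-1) * f x); auto. intros; ring.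
  apply Sm_mult; auto. apply Sm_const; auto.
Qed.

Lemma construct (e W : R -> R) pstar qstar rho tstar :
  0 < rho -> Sm (fun p => pstar - rho < p < pstar + rho) e ->
  (forall k x, ex_derive (Derive_n W k) x) -> Derive W qstar < 0 ->
  exists h qh ph, 0 < h /\ qh tstar = qstar /\ ph tstar = pstar /\
   Sm (fun t => tstar - h < t < tstar + h) qh /\ Sm (fun t => tstar - h < t < tstar + h) ph /\
   forall t, tstar - h < t < tstar + h ->
     is_derive qh t (Derive e (ph t)) /\ is_derive ph t (- Derive W (qh t)) /\
     Rabs (ph t - pstar) < rho /\ 0 < - Derive W (qh t).
Proof.
  intros Hrho He HW HWs.
  assert (SW : Sm (fun _ => True) W) by (intros k x _; apply HW).
  destruct (ex_derive_eps (Derive W) qstar (HW 1%nat qstar) (- Derive W qstar / 2)) as [d1 [Hd1 Hd1']].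
  lra.
  assert (HW1 : forall x, qstar - d1 < x < qstar + d1 -> Derive W x < Derive W qstar / 2).
  { intros x Hx. assert (Rabs (x - qstar) < d1) by (apply Rabs_def1; lra).
    specialize (Hd1' x H). apply Rabs_def2 in Hd1'. lra. }
  set (f1 := fun x => - W x).
  assert (Hf1d : forall x, Derive f1 x = - Derive W x) by (intros; apply Derive_opp).
  assert (Hf1 : forall x, qstar - d1 < x < qstar + d1 -> ex_derive f1 x /\ 0 < Derive f1 x).
  { intros x Hx. split. apply (ex_derive_opp W). apply (HW 0%nat).
    rewrite Hf1d. specialize (HW1 x Hx). lra. }
  set (r := d1 / 2).
  destruct (inv_fun f1 (qstar - d1) (qstar - r) (qstar + r) (qstar + d1)) as [g1 [Hg1 [Hg1f HA1B1]]];
    try (unfold r; lra); auto.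
  set (A1 := f1 (qstar - r)). set (B1 := f1 (qstar + r)).
  assert (Hf1q : A1 < f1 qstar < B1).
  { split; apply (incr_open f1 (qstar - d1) (qstar + d1)); auto; unfold r; lra. }
  assert (Sf1 : Sm (fun _ => True) f1) by (apply (Sm_opp _ W); auto; apply opn_T).
  assert (Sg1 : Sm (fun y => A1 < y < B1) g1).
  { apply Sm_invfun with (fun x => True) f1; auto. apply opn_int.
    intros. apply Hg1. auto.
    intros y Hy. destruct (Hg1 y Hy) as [H1 _]. assert (0 < Derive f1 (g1 y)) by (apply Hf1; unfold r in *; lra). lra. }
  set (c := e pstar + W qstar).
  set (eps2 := Rmin (f1 qstar - A1) (B1 - f1 qstar)).
  assert (Heps2 : 0 < eps2) by (apply Rmin_glb_lt; lra).
  destruct (ex_derive_eps e pstar (He 0%nat pstar ltac:(lra)) eps2 Heps2) as [d2 [Hd2 Hd2']].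
  set (rho1 := Rmin rho d2).
  assert (Hrho1 : 0 < rho1) by (apply Rmin_glb_lt; lra).
  assert (Hrho1a : rho1 <= rho) by apply Rmin_l.
  assert (Hrho1b : rho1 <= d2) by apply Rmin_r.
  set (P1 := fun p => pstar - rho1 < p < pstar + rho1).
  assert (oP1 : opn P1) by apply opn_int.
  assert (HeP1 : forall p, P1 p -> A1 < e p - c < B1).
  { intros p Hp. assert (Rabs (p - pstar) < d2) by (apply Rabs_def1; unfold P1 in Hp; lra).
    specialize (Hd2' p H). apply Rabs_def2 in Hd2'.
    pose proof (Rmin_l (f1 qstar - A1) (B1 - f1 qstar)). pose proof (Rmin_r (f1 qstar - A1) (B1 - f1 qstar)).
    unfold c, f1 in *. fold eps2 in H0, H1. lra. }
  set (Q := fun p => g1 (e p - c)).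
  assert (SQ : Sm P1 Q).
  { apply (Sm_comp P1 (fun y => A1 < y < B1) g1 (fun p => e p - c)); auto.
    apply (Sm_plus P1 e (fun _ => - c)); auto. apply Sm_sub with (fun p => pstar - rho < p < pstar + rho); auto.
    intros x Hx; unfold P1 in Hx; lra. apply Sm_const; auto. }
  assert (HQr : forall p, P1 p -> qstar - r < Q p < qstar + r).
  { intros p Hp. apply Hg1. auto. }
  set (F := fun p => - Derive W (Q p)).
  assert (HFpos : forall p, P1 p -> - Derive W qstar / 2 < F p ).
  { intros p Hp. unfold F. assert (Derive W (Q p) < Derive W qstar / 2); [|lra]. apply HW1. specialize (HQr p Hp). unfold r in HQr. lra. }
  assert (HFpos' : forall p, P1 p -> 0 < F p) by (intros p Hp; specialize (HFpos p Hp); lra).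
  assert (SF : Sm P1 F).
  { apply (Sm_opp P1 (fun p => Derive W (Q p))); auto. apply (Sm_comp P1 (fun _ => True) (Derive W) Q); auto. apply Sm_Derive; auto. }
  assert (HQd : forall p, P1 p -> is_derive Q p (Derive e p / F p)).
  { intros p Hp. unfold Q.
    replace (Derive e p / F p) with (Derive e p * / Derive f1 (g1 (e p - c))).
    apply is_derive_comp'. apply Hg1; auto. apply is_derive_sub_c. apply Derive_correct.
    apply (He 0%nat). unfold P1 in Hp; lra.
    rewrite Hf1d. unfold F, Q. unfold Rdiv. reflexivity. }
  set (iF := fun s => / F s).
  assert (SiF : Sm P1 iF) by (apply Sm_inv; auto; intros x Hx; specialize (HFpos' x Hx); lra).
  assert (ciF : forall z, P1 z -> continuous iF z).
  { intros z Hz. apply continuity_pt_filterlim. apply ex_derive_cpt. apply (SiF 0%nat). auto. }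
  set (G := fun p => RInt iF pstar p).
  assert (HGd : forall p, P1 p -> is_derive G p (iF p)).
  { intros p Hp. apply (is_derive_RInt iF G pstar p); [|apply ciF; auto].
    apply opn_loc with P1; auto. intros b Hb. unfold G. apply (@RInt_correct R_CompleteNormedModule).
    apply ex_RInt_continuous. intros z Hz. apply ciF.
    unfold P1 in *. pose proof (Rmin_l pstar b). pose proof (Rmin_r pstar b).
    pose proof (Rmax_l pstar b). pose proof (Rmax_r pstar b).
    destruct (Rle_dec pstar b). rewrite Rmin_left, Rmax_right in Hz by lra. lra.
    rewrite Rmin_right, Rmax_left in Hz by lra. lra. }
  assert (SG : Sm P1 G) by (apply Sm_antider with iF; auto).
  assert (HGd' : forall p, P1 p -> Derive G p = iF p) by (intros; apply is_derive_unique; auto).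
  assert (HG : forall x, pstar - rho1 < x < pstar + rho1 -> ex_derive G x /\ 0 < Derive G x).
  { intros x Hx. split. eexists; apply HGd; auto. rewrite HGd'; auto. unfold iF.
    apply Rinv_0_lt_compat. apply HFpos'. auto. }
  assert (HG0 : G pstar = 0) by (unfold G; rewrite RInt_point; reflexivity).
  destruct (inv_fun G (pstar - rho1) (pstar - rho1 / 2) (pstar + rho1 / 2) (pstar + rho1)) as [g2 [Hg2 [Hg2f HA2B2]]];
    try lra; auto.
  set (A2 := G (pstar - rho1 / 2)). set (B2 := G (pstar + rho1 / 2)).
  assert (HA2 : A2 < 0 < B2).
  { rewrite <- HG0. split; apply (incr_open G (pstar - rho1) (pstar + rho1)); auto; lra. }
  assert (Sg2 : Sm (fun y => A2 < y < B2) g2).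
  { apply Sm_invfun with P1 G; auto. apply opn_int.
    intros y Hy. destruct (Hg2 y Hy) as [H1 _]. unfold P1; lra.
    intros y Hy. apply Hg2; auto.
    intros y Hy. destruct (Hg2 y Hy) as [H1 _]. assert (0 < Derive G (g2 y)) by (apply HG; lra). intro; lra. }
  set (h := Rmin (- A2) B2).
  assert (Hh : 0 < h) by (apply Rmin_glb_lt; lra).
  assert (Hh1 : h <= - A2) by apply Rmin_l. assert (Hh2 : h <= B2) by apply Rmin_r.
  set (ph := fun t => g2 (t - tstar)).
  set (qh := fun t => Q (ph t)).
  set (O := fun t => tstar - h < t < tstar + h).
  assert (oO : opn O) by apply opn_int.
  assert (HOt : forall t, O t -> A2 < t - tstar < B2) by (unfold O; intros; lra).
  assert (Hph : forall t, O t -> pstar - rho1 / 2 < ph t < pstar + rho1 / 2) by (intros; apply Hg2; auto).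
  assert (HphP1 : forall t, O t -> P1 (ph t)) by (intros t Ht; specialize (Hph t Ht); unfold P1; lra).
  assert (Sph : Sm O ph).
  { apply (Sm_comp O (fun y => A2 < y < B2) g2 (fun t => t - tstar)); auto. apply (Sm_plus O (fun t => t) (fun _ => - tstar)); auto. apply Sm_id; auto.
    apply Sm_const; auto. }
  exists h, qh, ph. split; auto. split.
  { unfold qh, ph. rewrite Rminus_eq_0, <- HG0, Hg2f by lra. unfold Q, c.
    replace (e pstar - (e pstar + W qstar)) with (f1 qstar) by (unfold f1; ring).
    apply Hg1f. unfold r; lra. }
  split. { unfold ph. rewrite Rminus_eq_0, <- HG0, Hg2f by lra. reflexivity. }
  split. { apply (Sm_comp O P1 Q ph); auto. }
  split; auto.
  intros t Ht. fold O in Ht.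
  assert (Hdph : is_derive ph t (F (ph t))).
  { unfold ph. replace (F (g2 (t - tstar))) with (1 * / Derive G (g2 (t - tstar))).
    apply is_derive_comp'. apply Hg2; auto. apply is_derive_sub_c. exact (is_derive_id (K:=R_AbsRing) t).
    rewrite HGd'. unfold iF. field. specialize (HFpos' _ (HphP1 t Ht)). unfold ph in *. lra.
    apply HphP1; auto. }
  split.
  { unfold qh. replace (Derive e (ph t)) with (F (ph t) * (Derive e (ph t) / F (ph t))).
    apply is_derive_comp'. apply HQd; auto. auto.
    field. specialize (HFpos' _ (HphP1 t Ht)). lra. }
  split. { exact Hdph. }
  split. { specialize (Hph t Ht). apply Rabs_def1; lra. }
  { apply (HFpos' _ (HphP1 t Ht)). }
Qed.

Lemma cont_on_sub a b a' b' f : cont_on a b f -> a <= a' -> b' <= b -> cont_on a' b' f.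
Proof.
  intros H Ha Hb x Hx eps Heps. destruct (H x ltac:(lra) eps Heps) as [d [Hd H']].
  exists d; split; auto. intros y Hy. apply H'. lra.
Qed.

Lemma cont_on_minus a b f g : cont_on a b f -> cont_on a b g -> cont_on a b (fun x => f x - g x).
Proof.
  intros Hf Hg x Hx eps Heps.
  destruct (Hf x Hx (eps/2) ltac:(lra)) as [d1 [Hd1 H1]].
  destruct (Hg x Hx (eps/2) ltac:(lra)) as [d2 [Hd2 H2]].
  exists (Rmin d1 d2). split. apply Rmin_glb_lt; auto.
  intros y Hy Hyx. pose proof (Rmin_l d1 d2). pose proof (Rmin_r d1 d2).
  specialize (H1 y Hy ltac:(lra)). specialize (H2 y Hy ltac:(lra)).
  replace (f y - g y - (f x - g x)) with ((f y - f x) - (g y - g x)) by ring.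
  eapply Rle_lt_trans. apply Rabs_triang. rewrite Rabs_Ropp. lra.
Qed.

Lemma small_zero z M : 0 <= z -> (forall m, z <= M * (/2) ^ m) -> z = 0.
Proof.
  intros Hz H. destruct (Rle_lt_or_eq_dec 0 z Hz) as [Hlt|]; auto.
  exfalso. assert (HM : 0 < M) by (specialize (H 0%nat); simpl in H; lra).
  destruct (pow_lt_1_zero (/2) ltac:(rewrite Rabs_right; lra) (z / M)) as [N HN].
  apply Rdiv_lt_0_compat; auto.
  specialize (HN N (le_n N)). specialize (H N).
  rewrite Rabs_right in HN. 2: { apply Rle_ge, pow_le. lra. }
  apply (Rmult_lt_compat_l M) in HN; auto.
  replace (M * (z / M)) with z in HN by (field; lra). lra.
Qed.

Lemma contraction f g df dg a b t0 K M : a <= t0 <= b -> f t0 = 0 -> g t0 = 0 ->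
  (forall x, a < x < b -> is_derive f x (df x) /\ is_derive g x (dg x)) ->
  cont_on a b f -> cont_on a b g ->
  (forall x, a < x < b -> Rabs (df x) <= K * Rabs (g x) /\ Rabs (dg x) <= K * Rabs (f x)) ->
  0 <= K -> K * (b - a) <= 1/2 ->
  (forall x, a <= x <= b -> Rabs (f x) <= M /\ Rabs (g x) <= M) ->
  forall x, a <= x <= b -> f x = 0 /\ g x = 0.
Proof.
  intros Ht0 Hf0 Hg0 Hd Hcf Hcg HK HK0 HKb HM.
  assert (HM0 : 0 <= M) by (destruct (HM t0 Ht0) as [H _]; pose proof (Rabs_pos (f t0)); lra).
  assert (Hb : forall m x, a <= x <= b -> Rabs (f x) <= M * (/2)^m /\ Rabs (g x) <= M * (/2)^m).
  { induction m; intros x Hx. simpl. rewrite Rmult_1_r. auto.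
    assert (Hpm : 0 <= M * (/2)^m) by (apply Rmult_le_pos; auto; apply pow_le; lra).
    assert (key : forall (h dh : R -> R) (h' : R -> R), h t0 = 0 -> cont_on a b h ->
       (forall y, a < y < b -> is_derive h y (dh y)) ->
       (forall y, a < y < b -> Rabs (dh y) <= K * Rabs (h' y)) ->
       (forall y, a <= y <= b -> Rabs (h' y) <= M * (/2)^m) ->
       Rabs (h x) <= M * (/2) ^ (S m)).
    { intros h dh h' Hh0 Hch Hdh Hbd Hh'.
      assert (Hbd' : forall y, a < y < b -> Rabs (dh y) <= K * (M * (/2)^m)).
      { intros y Hy. eapply Rle_trans. apply Hbd; auto. apply Rmult_le_compat_l; auto. apply Hh'. lra. }
      simpl. 
      destruct (Rle_dec x t0).
      - pose proof (mvi h dh x t0 (K * (M * (/2)^m)) r) as HH.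
        rewrite Hh0, Rminus_0_l, Rabs_Ropp in HH.
        eapply Rle_trans. apply HH. intros. apply Hdh. lra.
        apply cont_on_sub with a b; auto; lra. intros. apply Hbd'. lra.
        replace (M * (/ 2 * (/ 2) ^ m)) with (/2 * (M * (/2)^m)) by ring.
        set (P := M * (/2)^m) in *. 
        assert (K * (t0 - x) <= 1/2) by nra. nra.
      - pose proof (mvi h dh t0 x (K * (M * (/2)^m)) ltac:(lra)) as HH.
        rewrite Hh0, Rminus_0_r in HH.
        eapply Rle_trans. apply HH. intros. apply Hdh. lra.
        apply cont_on_sub with a b; auto; lra. intros. apply Hbd'. lra.
        replace (M * (/ 2 * (/ 2) ^ m)) with (/2 * (M * (/2)^m)) by ring.
        set (P := M * (/2)^m) in *. 
        assert (K * (x - t0) <= 1/2) by nra. nra. }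
    split.
    - apply (key f df g); auto. intros. apply Hd; auto. intros. apply HK; auto.
      intros. apply IHm; auto.
    - apply (key g dg f); auto. intros. apply Hd; auto. intros. apply HK; auto.
      intros. apply IHm; auto. }
  intros x Hx. split.
  - assert (Rabs (f x) = 0). apply small_zero with M. apply Rabs_pos. intro m. apply Hb; auto.
    destruct (Req_dec (f x) 0); auto. apply Rabs_no_R0 in H0. contradiction.
  - assert (Rabs (g x) = 0). apply small_zero with M. apply Rabs_pos. intro m. apply Hb; auto.
    destruct (Req_dec (g x) 0); auto. apply Rabs_no_R0 in H0. contradiction.
Qed.

Lemma lip f a b K : (forall x, a < x < b -> ex_derive f x /\ Rabs (Derive f x) <= K) ->
  forall x y, a < x < b -> a < y < b -> Rabs (f x - f y) <= K * Rabs (x - y).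
Proof.
  intros H x y Hx Hy. destruct (Rle_dec y x).
  - rewrite (Rabs_right (x - y)) by lra. apply mvi with (Derive f); auto.
    intros. apply Derive_correct, H; lra. apply cont_on_der. intros; apply H; lra.
    intros; apply H; lra.
  - rewrite Rabs_minus_sym, (Rabs_left1 (x - y)) by lra.
    replace (- (x - y)) with (y - x) by ring. apply mvi with (Derive f); try lra.
    intros. apply Derive_correct, H; lra. apply cont_on_der. intros; apply H; lra.
    intros; apply H; lra.
Qed.

Lemma open_set_opn U : open_set U -> opn U.
Proof.
  intros H x Hx. destruct (H x Hx) as [d Hd]. exists d. split. apply cond_pos.
  intros y Hy. apply Hd. unfold disc. auto.
Qed.

Lemma left_lim f t l : filterlim f (at_left t) (locally l) ->
  forall eps, 0 < eps -> exists d, 0 < d /\ forall s, t - d < s < t -> Rabs (f s - l) < eps.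
Proof.
  intros H eps Heps. rewrite filterlim_locally in H. destruct (H (mkposreal eps Heps)) as [d Hd].
  exists d. split. apply cond_pos. intros s Hs. apply (Hd s). apply ball_R. apply Rabs_def1; lra. lra.
Qed.

Lemma right_lim_der (f : R -> R) (t : R) : ex_derive f t -> filterlim f (at_right t) (locally (f t)).
Proof.
  intros H. apply (filterlim_filter_le_1 (F := locally t)). apply filter_le_within.
  apply continuity_pt_filterlim. apply ex_derive_cpt. auto.
Qed.

Lemma Dfam_eq f D O : opn O -> (forall t, O t -> D 0%nat t = f t) ->
  (forall k t, O t -> is_derive (D k) t (D (S k) t)) -> forall k t, O t -> Derive_n f k t = D k t.
Proof.
  intros HO H0 HD. induction k; intros x Hx. symmetry. apply H0; auto.
  change (Derive (Derive_n f k) x = D (S k) x).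
  rewrite (Derive_ext_loc _ (D k)). apply is_derive_unique. auto.
  apply opn_loc with O; auto.
Qed.

Lemma glue_smooth (x xh : R -> R) tstar delta T h :
  0 < delta < tstar -> tstar + delta <= T -> tstar - h < tstar - delta -> T < tstar + h ->
  Sm (fun t => tstar - h < t < tstar + h) xh -> smooth_on (fun t => 0 <= t < tstar) x ->
  (forall t, tstar - delta <= t < tstar -> x t = xh t) ->
  smooth_on (fun t => 0 <= t <= T) (glue tstar delta x xh xh).
Proof.
  intros Hd HT Hh1 Hh2 Sxh [Dx [Hx0 HDx]] Hxeq.
  assert (HA : forall k t, 0 < t < tstar -> Dx k t = Derive_n x k t).
  { intros k t Ht. symmetry. apply Dfam_eq with (fun t => 0 < t < tstar); auto. apply opn_int.
    intros. apply Hx0. lra.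
    intros k' t' Ht'. apply hdw_derive with (fun t => 0 <= t < tstar) (Rmin t' (tstar - t')).
    apply Rmin_glb_lt; lra. intros y Hy. pose proof (Rmin_l t' (tstar - t')).
    pose proof (Rmin_r t' (tstar - t')). apply Rabs_def2 in Hy. lra. apply HDx. lra. }
  assert (HB : forall k t, tstar - delta < t < tstar -> Derive_n x k t = Derive_n xh k t).
  { intros k t Ht. apply Derive_n_ext_loc. apply opn_loc with (fun t => tstar - delta < t < tstar).
    apply opn_int. auto. intros. apply Hxeq. lra. }
  exists (fun k t => if Rlt_dec t tstar then Dx k t else Derive_n xh k t). split.
  - intros t Ht. unfold glue. destruct (Rlt_dec t tstar).
    + rewrite Hx0 by lra. destruct Rle_dec; auto. destruct Rle_dec; [|lra]. apply Hxeq. lra.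
    + destruct Rle_dec. lra. destruct Rle_dec; reflexivity.
  - intros k t Ht. destruct (Rlt_dec t tstar) as [Hlt|Hge].
    + apply hdw_loc with (fun t => 0 <= t < tstar) (Dx k) (tstar - t). lra.
      intros s Hs Hs'. apply Rabs_def2 in Hs. split. lra. destruct Rlt_dec; [reflexivity|lra].
      destruct Rlt_dec; [reflexivity|lra]. apply HDx. lra.
    + apply hdw_loc with (fun t => 0 <= t <= T) (Derive_n xh k) delta. lra.
      intros s Hs Hs'. apply Rabs_def2 in Hs. split; auto. destruct Rlt_dec; [|reflexivity].
      rewrite HA by lra. symmetry. apply HB. lra.
      destruct Rlt_dec; [lra|reflexivity].
      apply derive_hdw. apply Derive_correct. apply Sxh. lra.
Qed.

Lemma hdw_int (I : R -> Prop) f x l a b : (forall y, a < y < b -> I y) -> a < x < b ->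
  has_deriv_within I f x l -> is_derive f x l.
Proof.
  intros HI Hx H. apply hdw_derive with I (Rmin (x - a) (b - x)); auto.
  apply Rmin_glb_lt; lra. intros y Hy. apply HI.
  pose proof (Rmin_l (x - a) (b - x)). pose proof (Rmin_r (x - a) (b - x)).
  apply Rabs_def2 in Hy. lra.
Qed.

Lemma bound_from_der f df a b t0 C : a <= t0 <= b ->
  (forall x, a < x < b -> is_derive f x (df x)) -> cont_on a b f ->
  (forall x, a < x < b -> Rabs (df x) <= C) ->
  forall t, a <= t <= b -> Rabs (f t - f t0) <= C * Rabs (t - t0).
Proof.
  intros Ht0 Hd Hc HC t Ht. destruct (Rle_dec t0 t).
  - rewrite (Rabs_right (t - t0)) by lra. apply mvi with df; auto.
    intros; apply Hd; lra. apply cont_on_sub with a b; auto; lra. intros; apply HC; lra.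
  - rewrite (Rabs_minus_sym (f t)), (Rabs_minus_sym t). rewrite (Rabs_right (t0 - t)) by lra.
    apply mvi with df; try lra.
    intros; apply Hd; lra. apply cont_on_sub with a b; auto; lra. intros; apply HC; lra.
Qed.

Lemma cont_on_hdw (I : R -> Prop) f df a b : (forall y, a <= y <= b -> I y) ->
  (forall x, a <= x <= b -> has_deriv_within I f x (df x)) -> cont_on a b f.
Proof.
  intros HI H x Hx eps Heps. destruct (hdw_cont I f x (df x) (H x Hx) eps Heps) as [d [Hd H']].
  exists d. split; auto.
Qed.

Lemma cont_on_left_ext f a b l :
  (forall x, a <= x < b -> forall eps, 0 < eps -> exists d, 0 < d /\
      forall y, a <= y < b -> Rabs (y - x) < d -> Rabs (f y - f x) < eps) ->
  (forall eps, 0 < eps -> exists d, 0 < d /\ forall s, b - d < s < b -> Rabs (f s - l) < eps) ->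
  cont_on a b (fun t => if Rlt_dec t b then f t else l).
Proof.
  intros Hc Hl x Hx eps Heps. destruct (Rlt_dec x b) as [Hxb|Hxb].
  - destruct (Hc x ltac:(lra) eps Heps) as [d [Hd H]].
    exists (Rmin d (b - x)). split. apply Rmin_glb_lt; lra.
    intros y Hy Hyx. pose proof (Rmin_l d (b - x)). pose proof (Rmin_r d (b - x)).
    apply Rabs_def2 in Hyx as Hyx'. destruct (Rlt_dec y b); [|lra]. apply H; lra.
  - destruct (Hl eps Heps) as [d [Hd H]]. exists d. split; auto.
    intros y Hy Hyx. destruct (Rlt_dec y b).
    + apply Rabs_def2 in Hyx. apply H. lra.
    + rewrite Rminus_eq_0, Rabs_R0. auto.
Qed.

Lemma gap_pos V n x M : (1 <= n)%nat -> 0 < M -> band V n x <> band V (S n) x ->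
  (forall m, (1 <= m)%nat -> m <> n -> m <> S n -> M <= Rabs (band V m x - band V (S n) x)) ->
  0 < gap V (S n) x.
Proof.
  intros Hn HM Hne HA. unfold gap.
  set (E := fun y => exists m', (1 <= m')%nat /\ m' <> S n /\ y = Rabs (band V (S n) x - band V m' x)).
  set (m0 := Rmin M (Rabs (band V (S n) x - band V n x))).
  assert (Hm0 : 0 < m0).
  { apply Rmin_glb_lt; auto. apply Rabs_pos_lt. intro. apply Hne. lra. }
  assert (Hlb : forall y, E y -> m0 <= y).
  { intros y [m' [H1 [H2 ->]]]. destruct (Nat.eq_dec m' n) as [->|Hmn].
    apply Rmin_r. eapply Rle_trans. apply Rmin_l. rewrite Rabs_minus_sym. apply HA; auto. }
  assert (HE : E (Rabs (band V (S n) x - band V n x))).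
  { exists n. split; auto. }
  destruct (Glb_Rbar_correct E) as [H1 H2].
  assert (Ha : Rbar_le m0 (Glb_Rbar E)).
  { apply H2. intros y Hy. simpl. apply Hlb; auto. }
  assert (Hb : Rbar_le (Glb_Rbar E) (Rabs (band V (S n) x - band V n x))) by (apply H1; auto).
  fold E. destruct (Glb_Rbar E) as [g| |]; simpl in *; try contradiction. lra.
Qed.

Lemma is_derive_sub (f g : R -> R) x df dg : is_derive f x df -> is_derive g x dg ->
  is_derive (fun y => f y - g y) x (df - dg).
Proof.
  intros H1 H2. pose proof (is_derive_minus f g x df dg H1 H2) as H. exact H.
Qed.
Theorem proposition3p7
  (V W : R -> R) (n : nat) (U : R -> Prop) (pstar : R)
  (q0 p0 tstar qstar : R) (q p : R -> R)
  (* potentials *)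
  (HV : smooth V) (HVper : forall z, V (z + 1) = V z)
  (HW : smooth W)
  (HWb : forall k : nat, (1 <= k)%nat -> exists C, forall x, Rabs (Derive_n W k x) <= C)
  (* linear band crossing *)
  (Hn : (1 <= n)%nat)
  (HUB : forall x, U x -> 0 <= x <= 2 * PI)
  (HUo : open_set U) (HpU : U pstar)
  (A1a : band V n pstar = band V (S n) pstar)
  (A1b : forall x, U x -> band V n x = band V (S n) x -> x = pstar)
  (A2 : exists M, 0 < M /\ forall x m, closure_set U x -> (1 <= m)%nat -> m <> n -> m <> S n ->
          M <= Rabs (band V m x - band V (S n) x) /\ M <= Rabs (band V n x - band V m x))
  (A3p : smooth_on U (Eplus_band V n pstar) /\
         exists chi : R -> R -> C,
           (forall x, U x -> eigfun V x (Eplus_band V n pstar x) (chi x)) /\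
           (forall z, smooth_on U (fun x => Re (chi x z)) /\ smooth_on U (fun x => Im (chi x z))))
  (A3m : smooth_on U (Eminus_band V n pstar) /\
         exists chi : R -> R -> C,
           (forall x, U x -> eigfun V x (Eminus_band V n pstar x) (chi x)) /\
           (forall z, smooth_on U (fun x => Re (chi x z)) /\ smooth_on U (fun x => Im (chi x z))))
  (A4 : 0 < Derive (Eplus_band V n pstar) pstar /\ Derive (Eminus_band V n pstar) pstar < 0)
  (* band crossing scenario *)
  (Hgap0 : 0 < gap V n p0) (Htstar : 0 < tstar)
  (Hsol : smooth_on (fun t => 0 <= t < tstar) q /\ smooth_on (fun t => 0 <= t < tstar) p /\
          solves_on (fun t => 0 <= t < tstar) (band V n) W q p /\ q 0 = q0 /\ p 0 = p0)
  (Huniq : forall q' p' : R -> R,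
          smooth_on (fun t => 0 <= t < tstar) q' -> smooth_on (fun t => 0 <= t < tstar) p' ->
          solves_on (fun t => 0 <= t < tstar) (band V n) W q' p' -> q' 0 = q0 -> p' 0 = p0 ->
          forall t, 0 <= t < tstar -> q' t = q t /\ p' t = p t)
  (Hgap : forall t, 0 <= t < tstar -> 0 < gap V n (p t))
  (Hlimp : filterlim p (at_left tstar) (locally pstar))
  (Hlimq : filterlim q (at_left tstar) (locally qstar))
  (HWstar : 0 < - Derive W qstar) :
  exists delta0, 0 < delta0 /\
  forall delta, 0 < delta -> delta < delta0 -> delta < tstar ->
  exists qp pp : R -> R,
    (* (i) *)
    let I := fun t => tstar - delta <= t <= tstar + delta in
    (smooth_on I qp /\ smooth_on I pp /\ solves_on I (Eplus_band V n pstar) W qp pp /\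
     (forall t, I t -> U (pp t)) /\ qp tstar = qstar /\ pp tstar = pstar) /\
    (forall q' p' : R -> R,
       smooth_on I q' -> smooth_on I p' -> solves_on I (Eplus_band V n pstar) W q' p' ->
       (forall t, I t -> U (p' t)) -> q' tstar = qstar -> p' tstar = pstar ->
       forall t, I t -> q' t = qp t /\ p' t = pp t) /\
    (forall t, tstar - delta <= t < tstar -> q t = qp t /\ p t = pp t) /\
    (* (ii) and (iii) *)
    exists T1, tstar + delta < T1 /\
    forall T, tstar + delta <= T <= T1 ->
    exists qn pn : R -> R,
      solves_on (fun t => tstar < t <= T) (band V (S n)) W qn pn /\
      filterlim qn (at_right tstar) (locally qstar) /\
      filterlim pn (at_right tstar) (locally pstar) /\
      (forall t, tstar < t <= T -> 0 < gap V (S n) (pn t)) /\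
      (forall t, tstar < t <= tstar + delta -> qp t = qn t /\ pp t = pn t) /\
      smooth_on (fun t => 0 <= t <= T) (glue tstar delta q qp qn) /\
      smooth_on (fun t => 0 <= t <= T) (glue tstar delta p pp pn).
Proof.
  destruct A2 as [M [HM A2']].
  destruct A3p as [He_sm _].
  set (e := Eplus_band V n pstar) in *.
  pose proof (open_set_opn U HUo) as oU.
  destruct (smooth_on_Sm U e oU He_sm) as [De [_ [_ SeU]]].
  destruct (oU pstar HpU) as [r0 [Hr0 Hr0U]].
  destruct (ex_derive_eps (Derive e) pstar (SeU 1%nat pstar HpU) 1 Rlt_0_1) as [r1 [Hr1 Hr1']].
  destruct (ex_derive_eps (Derive (Derive e)) pstar (SeU 2%nat pstar HpU) 1 Rlt_0_1) as [r2 [Hr2 Hr2']].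
  set (rb := Rmin r0 (Rmin r1 r2)).
  assert (Hrb : 0 < rb) by (apply Rmin_glb_lt; auto; apply Rmin_glb_lt; auto).
  assert (Hrb0 : rb <= r0) by apply Rmin_l.
  assert (Hrb1 : rb <= r1) by (eapply Rle_trans; [apply Rmin_r|apply Rmin_l]).
  assert (Hrb2 : rb <= r2) by (eapply Rle_trans; [apply Rmin_r|apply Rmin_r]).
  set (B := fun x => pstar - rb < x < pstar + rb).
  assert (HBU : forall x, B x -> U x).
  { intros x Hx. apply Hr0U. unfold B in Hx. apply Rabs_def1; lra. }
  set (L := Rabs (Derive e pstar) + 1).
  set (Lam := Rabs (Derive (Derive e) pstar) + 1).
  assert (HL : forall x, B x -> Rabs (Derive e x) <= L).
  { intros x Hx. assert (Rabs (x - pstar) < r1) by (unfold B in Hx; apply Rabs_def1; lra).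
    specialize (Hr1' x H). pose proof (Rabs_triang_inv (Derive e x) (Derive e pstar)). unfold L. lra. }
  assert (HLam : forall x y, B x -> B y -> Rabs (Derive e x - Derive e y) <= Lam * Rabs (x - y)).
  { apply lip. intros x Hx. split. apply (SeU 1%nat x). apply HBU; auto.
    assert (Rabs (x - pstar) < r2) by (apply Rabs_def1; lra).
    specialize (Hr2' x H). pose proof (Rabs_triang_inv (Derive (Derive e) x) (Derive (Derive e) pstar)). unfold Lam. lra. }
  assert (HLam0 : 0 < Lam) by (unfold Lam; pose proof (Rabs_pos (Derive (Derive e) pstar)); lra).
  assert (HL0 : 0 < L) by (unfold L; pose proof (Rabs_pos (Derive e pstar)); lra).
  destruct (HWb 1%nat (le_n 1)) as [C1 HC1].
  destruct (HWb 2%nat ltac:(lia)) as [C2 HC2].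
  assert (HC1' : forall x, Rabs (Derive W x) <= C1) by exact HC1.
  assert (HC10 : 0 <= C1) by (eapply Rle_trans; [apply Rabs_pos|apply (HC1' 0)]).
  assert (HC20 : 0 <= C2) by (eapply Rle_trans; [apply Rabs_pos|apply (HC2 0)]).
  assert (HWd : forall k x, ex_derive (Derive_n W k) x) by (intros k x; exact (HW (S k) x)).
  assert (HC2' : forall x y, Rabs (Derive W x - Derive W y) <= C2 * Rabs (x - y)).
  { intros x y. apply lip with (Rmin x y - 1) (Rmax x y + 1).
    intros z Hz. split. apply (HWd 1%nat). apply (HC2 z).
    split. pose proof (Rmin_l x y); lra. pose proof (Rmax_l x y); lra.
    split. pose proof (Rmin_r x y); lra. pose proof (Rmax_r x y); lra. }
  assert (Se : Sm (fun p => pstar - rb / 2 < p < pstar + rb / 2) e).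
  { apply Sm_sub with U; auto. intros x Hx. apply HBU. unfold B; lra. }
  destruct (construct e W pstar qstar (rb / 2) tstar ltac:(lra) Se HWd ltac:(lra))
    as [h [qh [ph [Hh [Hqh0 [Hph0 [Sqh [Sph Hder]]]]]]]].
  set (O := fun t => tstar - h < t < tstar + h) in *.
  destruct (ex_derive_eps (Derive W) qstar (HWd 1%nat qstar) (- Derive W qstar / 2) ltac:(lra)) as [rW [HrW HrW']].
  assert (HWpos : forall x, Rabs (x - qstar) < rW -> 0 < - Derive W x).
  { intros x Hx. specialize (HrW' x Hx). apply Rabs_def2 in HrW'. lra. }
  destruct (left_lim q tstar qstar Hlimq rW HrW) as [dq [Hdq Hdq']].
  destruct (left_lim p tstar pstar Hlimp (rb / 2) ltac:(lra)) as [dp [Hdp Hdp']].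
  set (K := Lam + C2).
  set (delta0 := Rmin (Rmin (h / 4) (Rmin dq dp)) (Rmin (rb / (4 * (C1 + 1))) (1 / (4 * (K + 1))))).
  assert (HK0 : 0 < K) by (unfold K; lra).
  exists delta0. split.
  { unfold delta0. repeat apply Rmin_glb_lt; try lra; apply Rdiv_lt_0_compat; lra. }
  intros delta Hd0 Hdd0 Hdt.
  assert (Hdh : delta < h / 4).
  { eapply Rlt_le_trans. exact Hdd0. unfold delta0. eapply Rle_trans; apply Rmin_l. }
  assert (Hddq : delta < dq).
  { eapply Rlt_le_trans. exact Hdd0. unfold delta0. eapply Rle_trans. apply Rmin_l. 
    eapply Rle_trans; [apply Rmin_r| apply Rmin_l]. }
  assert (Hddp : delta < dp).
  { eapply Rlt_le_trans. exact Hdd0. unfold delta0. eapply Rle_trans. apply Rmin_l. 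
    eapply Rle_trans; [apply Rmin_r| apply Rmin_r]. }
  assert (HdC1 : delta < rb / (4 * (C1 + 1))).
  { eapply Rlt_le_trans. exact Hdd0. unfold delta0. eapply Rle_trans. apply Rmin_r. apply Rmin_l. }
  assert (HdK : delta < 1 / (4 * (K + 1))).
  { eapply Rlt_le_trans. exact Hdd0. unfold delta0. eapply Rle_trans. apply Rmin_r. apply Rmin_r. }
  assert (HdC1' : C1 * delta < rb / 4).
  { apply Rmult_lt_compat_l with (r := 4 * (C1 + 1)) in HdC1; [|lra].
    replace (4 * (C1 + 1) * (rb / (4 * (C1 + 1)))) with rb in HdC1 by (field; lra). nra. }
  assert (HdK' : K * (2 * delta) <= 1 / 2).
  { apply Rmult_lt_compat_l with (r := 4 * (K + 1)) in HdK; [|lra].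
    replace (4 * (K + 1) * (1 / (4 * (K + 1)))) with 1 in HdK by (field; lra). nra. }
  assert (HphB : forall t, O t -> Rabs (ph t - pstar) < rb / 2) by (intros t Ht; apply Hder; auto).
  assert (HphB' : forall t, O t -> B (ph t)).
  { intros t Ht. specialize (HphB t Ht). apply Rabs_def2 in HphB. unfold B; lra. }
  assert (Hcqh : forall a b, tstar - h < a -> b < tstar + h -> cont_on a b qh).
  { intros a b Ha Hb. apply cont_on_der. intros. apply (Sqh 0%nat). unfold O; lra. }
  assert (Hcph : forall a b, tstar - h < a -> b < tstar + h -> cont_on a b ph).
  { intros a b Ha Hb. apply cont_on_der. intros. apply (Sph 0%nat). unfold O; lra. }
  assert (Hqhb : forall t, tstar - delta <= t <= tstar + delta -> Rabs (qh t - qstar) <= L * delta).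
  { intros t Ht. rewrite <- Hqh0. eapply Rle_trans.
    apply (bound_from_der qh (fun x => Derive e (ph x)) (tstar - delta) (tstar + delta) tstar L); try lra.
    intros x Hx. apply Hder. unfold O; lra. apply Hcqh; lra.
    intros x Hx. apply HL. apply HphB'. unfold O; lra.
    apply Rmult_le_compat_l. lra. apply Rabs_le. lra. }
  exists qh, ph. cbv zeta.
  destruct Hsol as [Sq [Sp [Hs _]]].
  set (a := tstar - delta).
  assert (Ha0 : 0 < a) by (unfold a; lra).
  assert (Hqd : forall x, 0 < x < tstar -> is_derive q x (Derive (band V n) (p x)) /\ is_derive p x (- Derive W (q x))).
  { intros x Hx. destruct (Hs x ltac:(lra)) as [H1 H2]. split.
    apply hdw_int with (fun t => 0 <= t < tstar) 0 tstar; auto. intros; lra.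
    apply hdw_int with (fun t => 0 <= t < tstar) 0 tstar; auto. intros; lra. }
  assert (Hreg : forall x, a <= x < tstar -> Rabs (q x - qstar) < rW /\ Rabs (p x - pstar) < rb / 2).
  { intros x Hx. split. apply Hdq'. unfold a in Hx; lra. apply Hdp'. unfold a in Hx; lra. }
  assert (Hpinc : forall x y, a <= x -> x < y -> y < tstar -> p x < p y).
  { intros x y Hx Hxy Hy. apply incr_lt with (fun z => - Derive W (q z)); auto.
    intros z Hz. apply Hqd. lra.
    apply cont_on_der. intros z Hz. eexists. apply Hqd. lra.
    intros z Hz. apply HWpos. apply Hreg. lra. }
  assert (Hplt : forall x, a <= x < tstar -> p x < pstar).
  { intros x Hx. destruct (Rlt_dec (p x) pstar) as [|Hn']; auto. exfalso.
    set (s := (x + tstar) / 2).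
    assert (Hps : pstar < p s) by (apply Rle_lt_trans with (p x); [lra| apply Hpinc; unfold s; lra]).
    destruct (left_lim p tstar pstar Hlimp (p s - pstar) ltac:(lra)) as [d [Hd Hd']].
    set (s' := Rmax ((s + tstar) / 2) (tstar - d / 2)).
    assert (Hs' : s < s' < tstar).
    { unfold s'. split. eapply Rlt_le_trans; [|apply Rmax_l]. unfold s; lra.
      apply Rmax_lub_lt; unfold s; lra. }
    assert (Hs'2 : tstar - d < s') by (unfold s'; eapply Rlt_le_trans; [|apply Rmax_r]; lra).
    specialize (Hd' s' ltac:(lra)). assert (p s < p s') by (apply Hpinc; unfold s in *; lra).
    apply Rabs_def2 in Hd'. lra. }
  assert (Hde : forall x, a <= x < tstar -> Derive (band V n) (p x) = Derive e (p x)).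
  { intros x Hx. apply Derive_ext_loc. apply opn_loc with (fun y => p x - 1 < y < pstar).
    apply opn_int. specialize (Hplt x Hx). lra.
    intros y Hy. unfold e, Eplus_band. destruct Rlt_dec; [reflexivity|lra]. }
  set (qt := fun t => if Rlt_dec t tstar then q t else qstar).
  set (pt := fun t => if Rlt_dec t tstar then p t else pstar).
  assert (Hqt : forall t, t < tstar -> qt t = q t) by (intros; unfold qt; destruct Rlt_dec; [reflexivity|lra]).
  assert (Hpt : forall t, t < tstar -> pt t = p t) by (intros; unfold pt; destruct Rlt_dec; [reflexivity|lra]).
  assert (Hqtd : forall x, a < x < tstar -> is_derive qt x (Derive e (p x))).
  { intros x Hx. rewrite <- Hde by lra. apply is_derive_ext_loc with q.
    apply opn_loc with (fun y => a < y < tstar). apply opn_int. auto. intros; symmetry; apply Hqt; lra.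
    apply Hqd; lra. }
  assert (Hptd : forall x, a < x < tstar -> is_derive pt x (- Derive W (q x))).
  { intros x Hx. apply is_derive_ext_loc with p.
    apply opn_loc with (fun y => a < y < tstar). apply opn_int. auto. intros; symmetry; apply Hpt; lra.
    apply Hqd; lra. }
  assert (Hcw : forall (f : R -> R) df, (forall x, 0 <= x < tstar -> has_deriv_within (fun t => 0 <= t < tstar) f x (df x)) ->
     forall x, a <= x < tstar -> forall eps, 0 < eps -> exists d, 0 < d /\
      forall y, a <= y < tstar -> Rabs (y - x) < d -> Rabs (f y - f x) < eps).
  { intros f df Hf x Hx eps Heps. destruct (hdw_cont _ f x (df x) (Hf x ltac:(lra)) eps Heps) as [d [Hd H']].
    exists d; split; auto. intros y Hy Hyx. apply H'; auto. lra. }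
  assert (Hcqt : cont_on a tstar qt).
  { apply cont_on_left_ext. apply Hcw with (fun x => Derive (band V n) (p x)). intros; apply Hs; auto.
    intros eps Heps. destruct (left_lim q tstar qstar Hlimq eps Heps) as [d [Hd Hd']]. exists d; auto. }
  assert (Hcpt : cont_on a tstar pt).
  { apply cont_on_left_ext. apply Hcw with (fun x => - Derive W (q x)). intros; apply Hs; auto.
    intros eps Heps. destruct (left_lim p tstar pstar Hlimp eps Heps) as [d [Hd Hd']]. exists d; auto. }
  assert (Hback : forall t, a <= t <= tstar -> qt t - qh t = 0 /\ pt t - ph t = 0).
  { apply (contraction (fun t => qt t - qh t) (fun t => pt t - ph t)
      (fun x => Derive e (p x) - Derive e (ph x)) (fun x => - Derive W (q x) - - Derive W (qh x))
      a tstar tstar K (rW + L * delta + rb)).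
    - unfold a; lra.
    - unfold qt. destruct Rlt_dec; [lra|]. rewrite Hqh0. ring.
    - unfold pt. destruct Rlt_dec; [lra|]. rewrite Hph0. ring.
    - intros x Hx. split; apply is_derive_sub; auto; apply Hder; unfold O, a in *; lra.
    - apply cont_on_minus; auto. apply Hcqh; unfold a; lra.
    - apply cont_on_minus; auto. apply Hcph; unfold a; lra.
    - intros x Hx. rewrite Hqt, Hpt by lra. split.
      + eapply Rle_trans. apply HLam. 
        destruct (Hreg x ltac:(lra)) as [_ H]. apply Rabs_def2 in H. unfold B; lra.
        apply HphB'. unfold O, a in *; lra.
        apply Rmult_le_compat_r. apply Rabs_pos. unfold K; lra.
      + replace (- Derive W (q x) - - Derive W (qh x)) with (Derive W (qh x) - Derive W (q x)) by ring.
        eapply Rle_trans. apply HC2'. rewrite Rabs_minus_sym.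
        apply Rmult_le_compat_r. apply Rabs_pos. unfold K; lra.
    - unfold K; lra.
    - unfold a. lra.
    - intros x Hx. assert (0 <= L * delta) by nra. destruct (Rlt_dec x tstar).
      + rewrite Hqt, Hpt by lra. destruct (Hreg x ltac:(lra)) as [H1 H2].
        pose proof (Hqhb x ltac:(unfold a in *; lra)). pose proof (HphB x ltac:(unfold O, a in *; lra)).
        split.
        * replace (q x - qh x) with ((q x - qstar) - (qh x - qstar)) by ring.
          eapply Rle_trans. apply Rabs_triang. rewrite Rabs_Ropp. lra.
        * replace (p x - ph x) with ((p x - pstar) - (ph x - pstar)) by ring.
          eapply Rle_trans. apply Rabs_triang. rewrite Rabs_Ropp. pose proof (Rabs_pos (q x - qstar)). lra.
      + assert (x = tstar) by lra. subst x. unfold qt, pt. destruct Rlt_dec; [lra|].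
        rewrite Hqh0, Hph0, !Rminus_eq_0, Rabs_R0. split; lra. }
  assert (Hback' : forall t, tstar - delta <= t < tstar -> q t = qh t /\ p t = ph t).
  { intros t Ht. destruct (Hback t ltac:(unfold a; lra)) as [H1 H2].
    rewrite Hqt in H1 by lra. rewrite Hpt in H2 by lra. split; lra. }
  unfold a in *. clear a.
  split.
  {
    split. apply Sm_smooth_on with O; auto. intros t Ht; cbv beta in Ht; unfold O; lra.
    split. apply Sm_smooth_on with O; auto. intros t Ht; cbv beta in Ht; unfold O; lra.
    split. intros t Ht. cbv beta in Ht. split; apply derive_hdw; apply Hder; unfold O; lra.
    split. intros t Ht. cbv beta in Ht. apply HBU. apply HphB'. unfold O; lra.
    split; auto. }
  split.
  {
    intros q' p' _ _ Hs' HU' Hq'0 Hp'0.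
    set (I := fun t => tstar - delta <= t <= tstar + delta) in *.
    assert (Hd' : forall x, tstar - delta < x < tstar + delta ->
       is_derive q' x (Derive e (p' x)) /\ is_derive p' x (- Derive W (q' x))).
    { intros x Hx. destruct (Hs' x ltac:(unfold I; lra)) as [H1 H2]. split.
      apply hdw_int with I (tstar - delta) (tstar + delta); auto. intros; unfold I; lra.
      apply hdw_int with I (tstar - delta) (tstar + delta); auto. intros; unfold I; lra. }
    assert (Hcq' : cont_on (tstar - delta) (tstar + delta) q').
    { apply cont_on_hdw with I (fun x => Derive e (p' x)). intros; unfold I; lra.
      intros x Hx. apply Hs'. auto. }
    assert (Hcp' : cont_on (tstar - delta) (tstar + delta) p').
    { apply cont_on_hdw with I (fun x => - Derive W (q' x)). intros; unfold I; lra.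
      intros x Hx. apply Hs'. auto. }
    assert (Hp'b : forall t, I t -> Rabs (p' t - pstar) <= C1 * delta).
    { intros t Ht. rewrite <- Hp'0. eapply Rle_trans.
      apply (bound_from_der p' (fun x => - Derive W (q' x)) (tstar - delta) (tstar + delta) tstar C1); auto; try lra.
      intros x Hx. apply Hd'; auto.
      intros x Hx. rewrite Rabs_Ropp. apply HC1'.
      unfold I in Ht. apply Rmult_le_compat_l. lra. apply Rabs_le. lra. }
    assert (Hp'B : forall t, I t -> B (p' t)).
    { intros t Ht. specialize (Hp'b t Ht). unfold Rabs in Hp'b. destruct Rcase_abs in Hp'b; unfold B; lra. }
    assert (Hq'b : forall t, I t -> Rabs (q' t - qstar) <= L * delta).
    { intros t Ht. rewrite <- Hq'0. eapply Rle_trans.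
      apply (bound_from_der q' (fun x => Derive e (p' x)) (tstar - delta) (tstar + delta) tstar L); auto; try lra.
      intros x Hx. apply Hd'; auto.
      intros x Hx. apply HL. apply Hp'B. unfold I; lra.
      unfold I in Ht. apply Rmult_le_compat_l. lra. apply Rabs_le. lra. }
    assert (HH : forall t, I t -> q' t - qh t = 0 /\ p' t - ph t = 0).
    { apply (contraction (fun t => q' t - qh t) (fun t => p' t - ph t)
        (fun x => Derive e (p' x) - Derive e (ph x)) (fun x => - Derive W (q' x) - - Derive W (qh x))
        (tstar - delta) (tstar + delta) tstar K (2 * (L * delta) + rb)).
      - lra.
      - rewrite Hq'0, Hqh0. ring.
      - rewrite Hp'0, Hph0. ring.
      - intros x Hx. split; apply is_derive_sub; try apply Hd'; auto; apply Hder; unfold O; lra.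
      - apply cont_on_minus; auto. apply Hcqh; lra.
      - apply cont_on_minus; auto. apply Hcph; lra.
      - intros x Hx. split.
        + eapply Rle_trans. apply HLam. apply Hp'B. unfold I; lra.
          apply HphB'. unfold O; lra.
          apply Rmult_le_compat_r. apply Rabs_pos. unfold K; lra.
        + replace (- Derive W (q' x) - - Derive W (qh x)) with (Derive W (qh x) - Derive W (q' x)) by ring.
          eapply Rle_trans. apply HC2'. rewrite Rabs_minus_sym.
          apply Rmult_le_compat_r. apply Rabs_pos. unfold K; lra.
      - unfold K; lra.
      - lra.
      - intros x Hx. assert (0 <= L * delta) by nra.
        pose proof (Hqhb x Hx). pose proof (HphB x ltac:(unfold O; lra)).
        pose proof (Hq'b x Hx). pose proof (Hp'b x Hx).
        split.
        * replace (q' x - qh x) with ((q' x - qstar) - (qh x - qstar)) by ring.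
          eapply Rle_trans. apply Rabs_triang. rewrite Rabs_Ropp. lra.
        * replace (p' x - ph x) with ((p' x - pstar) - (ph x - pstar)) by ring.
          eapply Rle_trans. apply Rabs_triang. rewrite Rabs_Ropp. lra. }
    intros t Ht. destruct (HH t Ht). split; lra. }
  split. { exact Hback'. }
  exists (tstar + h / 2). split. lra.
  intros T HT. exists qh, ph.
  assert (Hphgt : forall t, tstar < t < tstar + h -> pstar < ph t).
  { intros t Ht. rewrite <- Hph0. apply incr_lt with (fun x => - Derive W (qh x)). lra.
    intros x Hx. apply Hder. unfold O; lra. apply Hcph; lra.
    intros x Hx. apply Hder. unfold O; lra. }
  split.
  { intros t Ht. 
    assert (Hde2 : Derive (band V (S n)) (ph t) = Derive e (ph t)).
    { apply Derive_ext_loc. apply opn_loc with (fun y => pstar < y < ph t + 1).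
      apply opn_int. specialize (Hphgt t ltac:(lra)). lra.
      intros y Hy. unfold e, Eplus_band. destruct Rlt_dec; [lra|reflexivity]. }
    rewrite Hde2. split; apply derive_hdw; apply Hder; unfold O; lra. }
  split. { rewrite <- Hqh0. apply right_lim_der. apply (Sqh 0%nat). unfold O; lra. }
  split. { rewrite <- Hph0. apply right_lim_der. apply (Sph 0%nat). unfold O; lra. }
  split.
  { intros t Ht. apply gap_pos with M; auto.
    intro Heq. apply A1b in Heq. specialize (Hphgt t ltac:(lra)). lra.
    apply HBU, HphB'. unfold O; lra.
    intros m Hm1 Hmn HmSn. apply A2'; auto.
    intros eps Heps. exists (ph t). split. apply HBU, HphB'. unfold O; lra.
    rewrite Rminus_eq_0, Rabs_R0. auto. }
  split. { intros t Ht. split; reflexivity. }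
  split.
  { apply glue_smooth with h; auto; try lra.
    intros t Ht. apply Hback'. auto. }
  { apply glue_smooth with h; auto; try lra.
    intros t Ht. apply Hback'. auto. }
Qed.
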